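(* Let $p=n^{\delta-1}$ with $0<\delta<1$, let $H$ be a graph on $m$ vertices with $m$ dividing $n$, and let $k'\le m$, $k'\le k\le n-m$ with $k-k'\ge 6n^{1-\delta}\log n$. Let $\tilde G_H\sim G_H(n,p,k)$, with planted vertex set $M$ and planted independent set $I'$ of size $k-k'$ among the vertices having no neighbor in $M$. For every integer $t$ with $1\le t\le\frac{k-k'}{2}$, with probability at least $1-2/n$, every set $Q\subset V\setminus(M\cup I')$ of vertices of $\tilde G_H[V\setminus M]$ with $|Q|=t<k-k'$ has at least $t+1$ neighbors in $I'$.
   Context: $G(n,p)$ is the Erdős–Rényi random graph on $V=[n]$. With $H$ on vertex set $[m]$, partition $[n]$ into parts $P_i=\{(i-1)\frac nm+1,\dots,i\frac nm\}$. Distribution $G_H(n,p,k)$: sample $G'\sim G(n,p)$; choose a uniformly random $M=\{v_1,\dots,v_m\}$ with $v_i\in P_i$ and replace $G'[M]$ by a copy of $H$ with vertex $i$ at $v_i$, giving $G_H$; among the vertices of $G_H$ with no neighbor in $M$, choose a uniformly random set $I'$ of size $k-k'$ and delete all edges inside $I'$, giving $\tilde G_H$ (if fewer than $k-k'$ such vertices exist, instead delete all edges inside a uniformly random set of $k$ vertices of $G_H$). *)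

(* Defs.v *)
From HB Require Import structures.
From mathcomp Require Import all_boot all_order all_algebra.
From mathcomp Require Import all_classical all_reals all_analysis.
Set Implicit Arguments. Unset Strict Implicit. Unset Printing Implicit Defensive.
Import Order.TTheory GRing.Theory Num.Theory.
Local Open Scope ring_scope.

(* Graphs on vertex type 'I_n are edge sets: sets of 2-element subsets. *)
Definition pairs (n : nat) : {set {set 'I_n}} := [set e : {set 'I_n} | #|e| == 2%N].

Section RandomGraph.
Variables (R : realType) (n m : nat) (p : R) (H : {set {set 'I_m}}) (k k' : nat).

Definition wG (E : {set {set 'I_n}}) : R :=
  if E \subset pairs n then p ^+ #|E| * (1 - p) ^+ (#|pairs n| - #|E|) else 0.

(* Vertex v (0-indexed) lies in part P_i iff v %/ (n/m) = i *)
Definition valid_choice (f : {ffun 'I_m -> 'I_n}) : bool :=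
  [forall i, (f i %/ (n %/ m))%N == i].

Definition wM (f : {ffun 'I_m -> 'I_n}) : R :=
  if valid_choice f then (#|[set g | valid_choice g]|%:R)^-1 else 0.

Definition planted (f : {ffun 'I_m -> 'I_n}) : {set 'I_n} := [set f i | i in 'I_m].

(* G_H: replace G'[M] by the copy of H with vertex i at f i *)
Definition EH (E : {set {set 'I_n}}) (f : {ffun 'I_m -> 'I_n}) : {set {set 'I_n}} :=
  [set e in E | ~~ (e \subset planted f)] :|: imset (fun e : {set 'I_m} => imset f (mem e)) (mem H).

Definition nonadjM (E : {set {set 'I_n}}) (f : {ffun 'I_m -> 'I_n}) : {set 'I_n} :=
  [set v | [forall u in planted f, [set u; v] \notin EH E f]].

(* distribution of the set I' whose inner edges are deleted *)
Definition wI (E : {set {set 'I_n}}) (f : {ffun 'I_m -> 'I_n}) (I : {set 'I_n}) : R :=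
  let N := nonadjM E f in
  if (k - k' <= #|N|)%N then
    (if (I \subset N) && (#|I| == k - k')%N then ('C(#|N|, k - k')%:R)^-1 else 0)
  else (if #|I| == k then ('C(n, k)%:R)^-1 else 0).

Definition Etilde (E : {set {set 'I_n}}) (f : {ffun 'I_m -> 'I_n}) (I : {set 'I_n})
  : {set {set 'I_n}} := [set e in EH E f | ~~ (e \subset I)].

Definition probGH
  (ev : {set {set 'I_n}} -> {ffun 'I_m -> 'I_n} -> {set 'I_n} -> bool) : R :=
  \sum_(E : {set {set 'I_n}}) \sum_(f : {ffun 'I_m -> 'I_n}) \sum_(I : {set 'I_n})
     wG E * wM f * wI E f I * (ev E f I)%:R.

End RandomGraph.

Definition expansion_event (n m : nat) (H : {set {set 'I_m}}) (k k' t : nat)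
  (E : {set {set 'I_n}}) (f : {ffun 'I_m -> 'I_n}) (I : {set 'I_n}) : bool :=
  [forall Q : {set 'I_n},
     ((Q \subset ~: (planted f :|: I)) && (#|Q| == t) && (t < k - k')%N) ==>
     (t.+1 <= #|[set y in I | [exists x in Q, [set x; y] \in Etilde H E f I]]|)%N].

(* Main.v *)
Require Import Defs.
From HB Require Import structures.
From mathcomp Require Import all_boot all_order all_algebra.
From mathcomp Require Import all_classical all_reals all_analysis.
From mathcomp Require Import ring lra zify.
Import Order.TTheory GRing.Theory Num.Theory.
Set Implicit Arguments. Unset Strict Implicit. Unset Printing Implicit Defensive.
Local Open Scope ring_scope.

Section PartA.
Variables (R : realType) (n : nat) (p : R).
Hypotheses (p0 : 0 <= p) (p1 : p <= 1).

Definition dsj (E C : {set {set 'I_n}}) : bool := [forall e in C, e \notin E].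

Definition tog (e : {set 'I_n}) (E : {set {set 'I_n}}) :=
  if e \in E then E :\ e else e |: E.

Lemma togK e : involutive (tog e).
Proof.
move=> E; rewrite /tog; case: (boolP (e \in E)) => eE.
  by rewrite setD11 finset.setD1K.
by rewrite setU11 finset.setU1K.
Qed.

Lemma sum_toggle (F : {set {set 'I_n}} -> R) (e : {set 'I_n}) :
  \sum_(E : {set {set 'I_n}}) F E = \sum_(E : {set {set 'I_n}} | e \notin E) (F E + F (e |: E)).
Proof.
rewrite (bigID (fun E : {set {set 'I_n}} => e \notin E)) /= big_split /=; congr (_ + _).
rewrite (reindex_inj (can_inj (togK e))) /=.
apply: eq_big => E.
  rewrite /tog; case: (boolP (e \in E)) => eE /=; first by rewrite setD11.
  by rewrite setU11.
rewrite /tog; case: (boolP (e \in E)) => eE /=.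
  by rewrite setD11.
by [].
Qed.

Lemma wG_add (E : {set {set 'I_n}}) (e : {set 'I_n}) : e \in pairs n -> e \notin E ->
  (1 - p) * wG p (e |: E) = p * wG p E.
Proof.
move=> eP eE; rewrite /wG.
have -> : (e |: E \subset pairs n) = (E \subset pairs n).
  by rewrite finset.subUset finset.sub1set eP.
case: ifP => EP; last by rewrite !mulr0.
rewrite cardsU1 eE /= add1n.
have lt : (#|E| < #|pairs n|)%N.
  apply: proper_card; rewrite finset.properEneq EP andbT.
  by apply/eqP => Ee; move: eE; rewrite Ee eP.
rewrite -(subnSK lt) !exprS.
set a := p ^+ _; set b := (1 - p) ^+ _; ring.
Qed.

Lemma step (e : {set 'I_n}) (psi : {set {set 'I_n}} -> R) : e \in pairs n ->
  (forall E : {set {set 'I_n}}, e \notin E -> psi (e |: E) = psi E) ->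
  \sum_(E : {set {set 'I_n}}) wG p E * psi E * (e \notin E)%:R = (1 - p) * \sum_(E : {set {set 'I_n}}) wG p E * psi E.
Proof.
move=> eP hpsi.
rewrite (sum_toggle _ e) (sum_toggle (fun E => wG p E * psi E) e) mulr_sumr.
apply: eq_bigr => E eE.
rewrite setU11 eE /= hpsi // mulr1 mulr0 addr0.
rewrite mulrDr mulrA (mulrA (1 - p)) wG_add //.
set a := wG p E; set b := psi E; ring.
Qed.

Lemma indep (C : {set {set 'I_n}}) (phi : {set {set 'I_n}} -> R) :
  C \subset pairs n -> (forall E : {set {set 'I_n}}, phi E = phi (E :\: C)) ->
  \sum_(E : {set {set 'I_n}}) wG p E * phi E * (dsj E C)%:R = (1 - p) ^+ #|C| * \sum_(E : {set {set 'I_n}}) wG p E * phi E.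
Proof.
move Hc : #|C| => c; elim: c C phi Hc => [|c IH] C phi Hc CP hphi.
  move/eqP: Hc; rewrite cards_eq0 => /eqP ->; rewrite expr0 mul1r.
  apply: eq_bigr => E _; suff -> : dsj E finset.set0 by rewrite mulr1.
  by apply/forallP => e; rewrite inE.
have /card_gt0P [e eC] : (0 < #|C|)%N by rewrite Hc.
set C' := C :\ e.
have HC' : #|C'| = c by rewrite /C' (cardsD1 e C) eC in Hc; case: Hc.
have C'P : C' \subset pairs n by exact: fintype.subset_trans (finset.subsetDl C [set e]) CP.
have dsjE (E : {set {set 'I_n}}) : dsj E C = (e \notin E) && dsj E C'.
  apply/forallP/andP => [h|[h1 /forallP h2] x].
    split; first by have := h e; rewrite eC.
    by apply/forallP => x; apply/implyP => /setD1P [_ xC]; have := h x; rewrite xC.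
  apply/implyP => xC; case: (eqVneq x e) => [->//|xe].
  by have := h2 x; rewrite /C' !inE xe xC.
have hphi' (E : {set {set 'I_n}}) : phi E = phi (E :\: C').
  rewrite hphi [in RHS]hphi; congr phi.
  apply/setP => x; rewrite !inE; case: (x \in C) => //=.
  by rewrite andbF.
transitivity (\sum_E wG p E * (phi E * (dsj E C')%:R) * (e \notin E)%:R).
  by apply: eq_bigr => E _; rewrite dsjE -mulnb natrM; ring.
rewrite step; last 2 first.
- exact: (fintype.subsetP CP e eC).
- move=> E eE; rewrite [phi (e |: E)]hphi [phi E]hphi.
  have -> : (e |: E) :\: C = E :\: C.
    by apply/setP => x; rewrite !inE; case: (eqVneq x e) => [->|]; rewrite ?eC ?andbF.
  have -> : dsj (e |: E) C' = dsj E C'.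
    apply/forallP/forallP => h x; have := h x; rewrite /C' !inE;
    by case: (eqVneq x e).
  by [].
under eq_bigr do rewrite mulrA.
by rewrite IH // exprS mulrA.
Qed.

End PartA.

Section PartB.
Variables (R : realType) (n : nat) (p : R).
Hypotheses (p0 : 0 <= p) (p1 : p <= 1).

Lemma wG_ge0 (E : {set {set 'I_n}}) : 0 <= wG p E.
Proof.
rewrite /wG; case: ifP => // _; apply: mulr_ge0; apply: exprn_ge0 => //.
by rewrite subr_ge0.
Qed.

Lemma wG_sum1 : p < 1 -> \sum_(E : {set {set 'I_n}}) wG p E = 1.
Proof.
move=> plt1.
have := @indep R n p (pairs n) (fun _ => 1) (fintype.subxx _) (fun E => erefl).
rewrite (bigD1 finset.set0) //= big1 ?addr0; last first.
  move=> E /set0Pn [e eE].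
  rewrite /wG; case: ifP => EP; last by rewrite !mul0r.
  suff -> : dsj E (pairs n) = false by rewrite mulr0.
  apply/negbTE/negP => /forallP /(_ e); rewrite (fintype.subsetP EP e eE) /=.
  by rewrite eE.
have -> : dsj finset.set0 (pairs n).
  apply/forallP => e; apply/implyP => _; by rewrite inE.
have w0 : wG p (finset.set0 : {set {set 'I_n}}) = (1 - p) ^+ #|pairs n|.
  by rewrite /wG finset.sub0set cards0 expr0 subn0 mul1r.
rewrite w0 !mulr1.
under eq_bigr do rewrite mulr1.
move=> h.
have nz : (1 - p) ^+ #|pairs n| != 0 by rewrite expf_neq0 // subr_eq0 eq_sym lt_eqF.
by apply: (mulfI nz); rewrite mulr1 -h.
Qed.

End PartB.

Section PartC.
Variables (R : realType) (n : nat) (k k' : nat).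

Definition wgen (N I : {set 'I_n}) : R :=
  if (k - k' <= #|N|)%N then
    (if (I \subset N) && (#|I| == k - k')%N then ('C(#|N|, k - k')%:R)^-1 else 0)
  else (if #|I| == k then ('C(n, k)%:R)^-1 else 0).

Lemma wgen_ge0 (N I : {set 'I_n}) : 0 <= wgen N I.
Proof. by rewrite /wgen; case: ifP => _; case: ifP => _; rewrite ?invr_ge0 ?ler0n. Qed.

Lemma wgen_sum (N : {set 'I_n}) : (k <= n)%N -> \sum_(I : {set 'I_n}) wgen N I = 1.
Proof.
move=> kn; rewrite /wgen; case hN: (k - k' <= #|N|)%N.
  rewrite -big_mkcond /= sumr_const.
  have -> : #|[pred I : {set 'I_n} | (I \subset N) && (#|I| == k - k')%N]| = 'C(#|N|, k - k').
    by rewrite -cards_draws; apply: eq_card => I; rewrite inE.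
  by rewrite -[X in X = 1]mulr_natr mulVf // pnatr_eq0 -lt0n bin_gt0.
rewrite -big_mkcond /= sumr_const.
have -> : #|[pred I : {set 'I_n} | #|I| == k]| = 'C(n, k).
  have := card_draws (ordinal n) k; rewrite card_ord => <-.
  by apply: eq_card => I; rewrite !inE.
by rewrite -[X in X = 1]mulr_natr mulVf // pnatr_eq0 -lt0n bin_gt0.
Qed.

Lemma wgen_mono (N Q I : {set 'I_n}) : I \subset ~: Q -> wgen N I <= wgen (N :\: Q) I.
Proof.
move=> IQ; rewrite /wgen.
have NQN : (#|N :\: Q| <= #|N|)%N by apply: subset_leq_card; apply: finset.subsetDl.
have IsubNQ : (I \subset N :\: Q) = (I \subset N).
  by rewrite finset.setDE finset.subsetI IQ andbT.
case: (leqP (k - k') #|N :\: Q|) => h1.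
  rewrite (leq_trans h1 NQN) IsubNQ.
  case: ifP => // /andP [_ _].
  rewrite lef_pV2 ?posrE ?ltr0n ?bin_gt0 ?ler_nat ?leq_bin2l //.
  exact: leq_trans h1 NQN.
case: ifP => h2; last by case: ifP.
case: ifP => [/andP [IN /eqP IK]|_]; last by case: ifP.
have : (#|I| <= #|N :\: Q|)%N by apply: subset_leq_card; rewrite IsubNQ.
by rewrite IK leqNgt h1.
Qed.

End PartC.

Section PartE.
Variables (n m : nat) (H : {set {set 'I_m}}).

Lemma sub2set (x y : 'I_n) (A : {set 'I_n}) : ([set x; y] \subset A) = (x \in A) && (y \in A).
Proof. by rewrite finset.subUset !finset.sub1set. Qed.

Definition Cset (Q T : {set 'I_n}) : {set {set 'I_n}} := [set [set x; y] | x in Q, y in T].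

Lemma Etilde_sub (E : {set {set 'I_n}}) f (I : {set 'I_n}) (x y : 'I_n) :
  x \notin planted f -> x \notin I -> [set x; y] \in E -> [set x; y] \in Etilde H E f I.
Proof.
move=> xM xI xyE; rewrite /Etilde /EH !inE xyE !sub2set (negbTE xM) (negbTE xI) /=.
by [].
Qed.

Lemma nonadj_inv (E C : {set {set 'I_n}}) f (Q : {set 'I_n}) :
  Q \subset ~: planted f ->
  (forall e, e \in C -> exists2 x, x \in Q & x \in e) ->
  nonadjM H E f :\: Q = nonadjM H (E :\: C) f :\: Q.
Proof.
move=> QM hC; apply/setP => v; rewrite !inE; case vQ: (v \in Q) => //=.
apply: eq_forallb => u; case uM: (u \in planted f) => //=.
rewrite /EH !inE.
case: (boolP ([set u; v] \in C)) => //= uvC.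
case: ([set u; v] \in E) => //=.
have [x xQ] := hC _ uvC; rewrite !inE => /orP [] /eqP xe.
  by move: (fintype.subsetP QM x xQ); rewrite inE xe uM.
by move: vQ; rewrite -xe xQ.
Qed.

Lemma Cset_meets (Q T : {set 'I_n}) e : e \in Cset Q T -> exists2 x, x \in Q & x \in e.
Proof. by case/imset2P => x y xQ yT ->; exists x => //; rewrite !inE eqxx. Qed.

Lemma Cset_pairs (Q T : {set 'I_n}) : Q \subset ~: T -> Cset Q T \subset pairs n.
Proof.
move=> QT; apply/fintype.subsetP => e /imset2P [x y xQ yT ->].
rewrite inE cards2; case: (eqVneq x y) => // xy.
by move: (fintype.subsetP QT x xQ); rewrite inE xy yT.
Qed.

Lemma Cset_card (Q T : {set 'I_n}) : Q \subset ~: T -> #|Cset Q T| = (#|Q| * #|T|)%N.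
Proof.
move=> QT; rewrite /Cset curry_imset2X card_in_imset ?cardsX //.
move=> [x y] [x' y'] /setXP [xQ yT] /setXP [x'Q y'T] /= eq.
have nT z : z \in Q -> z \notin T.
  by move=> zQ; move: (fintype.subsetP QT z zQ); rewrite inE.
have xx : x = x'.
  have : x \in [set x'; y'] by rewrite -eq !inE eqxx.
  rewrite !inE => /orP [/eqP //| /eqP xy']; by move: (nT x xQ); rewrite xy' y'T.
have yy : y = y'.
  have : y \in [set x'; y'] by rewrite -eq !inE eqxx orbT.
  rewrite !inE => /orP [/eqP yx'| /eqP //]; by move: (nT x' x'Q); rewrite -yx' yT.
by rewrite xx yy.
Qed.

End PartE.

Lemma extend (T : finType) (A B : {set T}) t :
  A \subset B -> (#|A| <= t)%N -> (t <= #|B|)%N ->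
  exists S : {set T}, [/\ A \subset S, S \subset B & #|S| = t].
Proof.
move=> AB At tB; rewrite -(subnKC At) in tB *.
move: tB; move: (t - #|A|)%N => d tB; clear At; elim: d A AB tB => [|d IH] A AB tB.
  by exists A; rewrite addn0.
have : (0 < #|B :\: A|)%N.
  by rewrite cardsDS // subn_gt0 (leq_trans _ tB) // addnS ltnS leq_addr.
case/card_gt0P => b; rewrite inE => /andP [bA bB].
have bAB : b |: A \subset B by rewrite finset.subUset finset.sub1set bB AB.
have cb : #|b |: A| = #|A|.+1 by rewrite cardsU1 bA.
have [|S [S1 S2 S3]] := IH (b |: A) bAB; first by rewrite cb addSnnS.
exists S; split => //; last by rewrite S3 cb addSnnS.
by apply: fintype.subset_trans S1; apply: finset.subsetUr.
Qed.

Lemma binexp a b : ('C(a, b) <= a ^ b)%N.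
Proof.
apply: (@leq_trans ('C(a, b) * b`!)); first by rewrite leq_pmulr ?fact_gt0.
rewrite bin_ffact; elim: b => [|b IH]; first by rewrite ffactn0 expn0.
by rewrite ffactnSr expnS mulnC leq_mul // leq_subr.
Qed.

Lemma numeric (R : realType) (n : nat) (p : R) (K t s : nat) :
  (1 < n)%N -> 0 <= p -> p <= 1 -> 6 * ln (n%:R : R) <= p * K%:R ->
  (0 < t)%N -> (K <= s)%N -> (t.*2 <= s)%N -> (s <= n)%N ->
  'C(n, t)%:R * ('C(s, t)%:R * (1 - p) ^+ (t * (s - t))) <= (n%:R : R)^-1.
Proof.
move=> n1 p0 p1 hp t0 Ks ts sn.
have n0 : 0 < (n%:R : R) by rewrite ltr0n; lia.
have q0 : 0 <= 1 - p by rewrite subr_ge0.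
have h1 : (1 - p) ^+ K <= ((n%:R : R) ^+ 6)^-1.
  apply: (@le_trans _ _ (expR (- p) ^+ K)).
    apply: lerXn2r; rewrite ?nnegrE ?expR_ge0 //.
    by have := expR_ge1Dx (- p).
  have -> : ((n%:R : R) ^+ 6)^-1 = expR (- (ln (n%:R : R) * 6%:R)).
    by rewrite expRN expRM_natr lnK // posrE.
  by rewrite -expRM_natr ler_expR mulNr lerN2 mulrC.
set x := (1 - p) ^+ (t * (s - t)).
have x0 : 0 <= x by apply: exprn_ge0.
have h2 : x <= ((n%:R : R) ^+ (t * 3))^-1.
  rewrite -(ler_pXn2r (_ : 0 < 2)%N) ?nnegrE ?invr_ge0 ?exprn_ge0 ?ler0n //.
  apply: (@le_trans _ _ ((1 - p) ^+ (K * t))).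
    rewrite /x -exprM; apply: ler_wiXn2l => //; first by rewrite lerBlDr lerDl.
    have ts' : (t * 2 <= s)%N by rewrite muln2.
    have e1 := leq_mul Ks (leqnn t).
    have e2 := leq_mul ts' (leqnn t).
    rewrite mulnBr; nia.
  rewrite exprM; apply: (@le_trans _ _ ((((n%:R : R) ^+ 6)^-1) ^+ t)).
    by apply: lerXn2r; rewrite ?nnegrE ?exprn_ge0 ?invr_ge0 ?exprn_ge0 ?ler0n.
  by rewrite !exprVn -!exprM (_ : (6 * t = t * 3 * 2)%N) //; lia.
have h3 : forall a, (a <= n)%N -> ('C(a, t)%:R : R) <= (n%:R : R) ^+ t.
  move=> a an; rewrite -natrX ler_nat; apply: leq_trans (binexp a t) _.
  by rewrite leq_exp2r.
apply: (@le_trans _ _ ((n%:R : R) ^+ t * ((n%:R : R) ^+ t * ((n%:R : R) ^+ (t * 3))^-1))).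
  apply: ler_pM; rewrite ?ler0n ?h3 //.
    by apply: mulr_ge0; rewrite ?ler0n.
  apply: ler_pM; rewrite ?ler0n ?h3 //.
have a0 : (n%:R : R) ^+ t != 0 by rewrite expf_neq0 // gt_eqF.
rewrite exprM !exprS expr0 mulr1.
have -> : (n%:R : R) ^+ t * ((n%:R : R) ^+ t * ((n%:R : R) ^+ t * ((n%:R : R) ^+ t * (n%:R : R) ^+ t))^-1)
  = ((n%:R : R) ^+ t)^-1.
  by field.
rewrite lef_pV2 ?posrE ?exprn_gt0 //.
by apply: ler_eXnr => //; rewrite ler1n; lia.
Qed.

Lemma sum2_ge (R : realType) (T1 T2 : finType) (F : T1 -> T2 -> R) a b :
  (forall x y, 0 <= F x y) -> F a b <= \sum_x \sum_y F x y.
Proof.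
move=> F0; apply: (@le_trans _ _ (\sum_y F a y)).
  rewrite (bigD1 b) //= lerDl; apply: sumr_ge0 => y _; exact: F0.
rewrite (bigD1 a) //= lerDl; apply: sumr_ge0 => x _; apply: sumr_ge0 => y _; exact: F0.
Qed.

Lemma sum_ind (R : realType) (T : finType) (P : pred T) (c : R) :
  \sum_i (P i)%:R * c = #|P|%:R * c.
Proof.
rewrite (bigID P) /= [X in _ + X]big1 ?addr0 => [|i /negbTE ->]; last by rewrite mul0r.
rewrite (eq_bigr (fun _ => c)) => [|i ->]; last by rewrite mul1r.
by rewrite sumr_const mulr_natl.
Qed.

Lemma swap4 (R : realType) (T1 T2 T3 T4 : finType) (a : T1 -> R) (F : T1 -> T2 -> T3 -> T4 -> R) :
  \sum_x a x * (\sum_y \sum_z \sum_w F x y z w) = \sum_z \sum_y \sum_w \sum_x a x * F x y z w.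
Proof.
transitivity (\sum_x \sum_y \sum_z \sum_w a x * F x y z w).
  apply: eq_bigr => x _; rewrite mulr_sumr; apply: eq_bigr => y _.
  rewrite mulr_sumr; apply: eq_bigr => z _; by rewrite mulr_sumr.
transitivity (\sum_x \sum_z \sum_y \sum_w a x * F x y z w).
  by apply: eq_bigr => x _; rewrite exchange_big.
rewrite exchange_big; apply: eq_bigr => z _.
rewrite exchange_big; apply: eq_bigr => y _.
by rewrite exchange_big.
Qed.

Section Main.
Variables (R : realType) (n m : nat) (H : {set {set 'I_m}}) (k k' t : nat) (p : R).
Variable (f : {ffun 'I_m -> 'I_n}).
Hypotheses (p0 : 0 <= p) (p1 : p <= 1) (hk : (k <= n)%N) (ht : (t.*2 <= k - k')%N)
  (t0 : (0 < t)%N).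

Definition cond (Q S I : {set 'I_n}) : bool :=
  [&& #|Q| == t, Q \subset ~: (planted f :|: I), S \subset I & #|S| == t].

Lemma wgen_card (N I : {set 'I_n}) :
  @wgen R n k k' N I != 0 -> (#|I| == (k - k')%N) || (#|I| == k).
Proof.
rewrite /wgen; case: ifP => _.
  by case: ifP => [/andP [_ h] _|]; rewrite ?h ?eqxx.
by case: ifP => [h _|]; rewrite ?h ?orbT ?eqxx.
Qed.

Lemma step1 (E : {set {set 'I_n}}) (I : {set 'I_n}) :
  wI R H k k' E f I * (~~ expansion_event H k k' t E f I)%:R <=
  \sum_(Q : {set 'I_n}) \sum_(S : {set 'I_n})
     @wgen R n k k' (nonadjM H E f :\: Q) I * (cond Q S I)%:R
       * (dsj E (Cset Q (I :\: S)))%:R.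
Proof.
have F0 : forall Q S, 0 <= @wgen R n k k' (nonadjM H E f :\: Q) I * (cond Q S I)%:R
       * (dsj E (Cset Q (I :\: S)))%:R.
  by move=> Q S; rewrite !mulr_ge0 ?ler0n ?wgen_ge0.
case: (boolP (expansion_event H k k' t E f I)) => ev.
  rewrite mulr0; apply: sumr_ge0 => Q _; apply: sumr_ge0 => S _; exact: F0.
rewrite mulr1.
have -> : wI R H k k' E f I = @wgen R n k k' (nonadjM H E f) I by [].
case: (eqVneq (@wgen R n k k' (nonadjM H E f) I) 0) => [->| wnz].
  apply: sumr_ge0 => Q _; apply: sumr_ge0 => S _; exact: F0.
have tI : (t <= #|I|)%N.
  have := wgen_card wnz; case/orP => /eqP ->; first by lia.
  by move: ht; rewrite -muln2; lia.
move: ev => /forallPn [Q]; rewrite negb_imply => /andP [/andP [/andP [QMI /eqP Qt] tK] hNB].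
set NB := [set y in I | _] in hNB.
have NBt : (#|NB| <= t)%N by rewrite leqNgt.
have NBI : NB \subset I by apply/fintype.subsetP => y; rewrite inE => /andP [].
have [S [S1 S2 S3]] := extend NBI NBt tI.
have IQ : I \subset ~: Q.
  apply/fintype.subsetP => y yI; rewrite inE; apply/negP => yQ.
  by move: (fintype.subsetP QMI y yQ); rewrite !inE yI orbT.
apply: le_trans (sum2_ge Q S F0).
have -> : cond Q S I by rewrite /cond Qt eqxx QMI S2 S3 eqxx.
have -> : dsj E (Cset Q (I :\: S)).
  apply/forallP => e; apply/implyP => /imset2P [x y xQ yIS ->].
  apply/negP => xyE.
  have := fintype.subsetP QMI x xQ; rewrite !inE negb_or => /andP [xM xI].
  have := Etilde_sub H xM xI xyE => hE.
  move: yIS; rewrite inE => /andP [yS yI].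
  have : y \in NB by rewrite inE yI; apply/existsP; exists x; rewrite xQ.
  by move/(fintype.subsetP S1); rewrite (negbTE yS).
by rewrite !mulr1 wgen_mono.
Qed.

Variable g : R.
Hypothesis hg : forall s, (k - k' <= s)%N -> (s <= n)%N ->
  'C(s, t)%:R * (1 - p) ^+ (t * (s - t)) <= g.

Lemma step2 (Q I : {set 'I_n}) :
  \sum_(S : {set 'I_n}) \sum_(E : {set {set 'I_n}}) wG p E *
     (@wgen R n k k' (nonadjM H E f :\: Q) I * (cond Q S I)%:R
       * (dsj E (Cset Q (I :\: S)))%:R)
  <= (#|Q| == t)%:R * g * \sum_(E : {set {set 'I_n}}) wG p E * @wgen R n k k' (nonadjM H E f :\: Q) I.
Proof.
set W := \sum_(E : {set {set 'I_n}}) _.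
have W0 : 0 <= W by apply: sumr_ge0 => E _; rewrite mulr_ge0 ?wG_ge0 ?wgen_ge0.
have g0 : 0 <= g.
  apply: le_trans (hg (leqnn (k - k')) _); last by apply: leq_trans hk; apply: leq_subr.
  by rewrite mulr_ge0 ?ler0n ?exprn_ge0 // subr_ge0.
case hQ: ((#|Q| == t) && (Q \subset ~: (planted f :|: I))); last first.
  rewrite big1 => [|S _]; first by rewrite !mulr_ge0 ?ler0n.
  have -> : cond Q S I = false.
    by rewrite /cond; move: hQ; case: (#|Q| == t); case: (Q \subset _).
  by rewrite big1 // => E _; rewrite mulr0 mul0r mulr0.
case/andP: hQ => /eqP Qt QMI; rewrite Qt eqxx mul1r.
have QM : Q \subset ~: planted f.
  apply/fintype.subsetP => x xQ; move: (fintype.subsetP QMI x xQ); rewrite !inE negb_or.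
  by case/andP.
have QI : Q \subset ~: I.
  apply/fintype.subsetP => x xQ; move: (fintype.subsetP QMI x xQ); rewrite !inE negb_or.
  by case/andP.
rewrite [leLHS](_ : _ = \sum_(S : {set 'I_n}) ((S \subset I) && (#|S| == t))%:R * ((1 - p) ^+ (t * (#|I| - t)) * W)); last first.
  apply: eq_bigr => S _.
  case hS: ((S \subset I) && (#|S| == t)); last first.
    have -> : cond Q S I = false by rewrite /cond Qt eqxx QMI hS.
    by rewrite mul0r big1 // => E _; rewrite mulr0 mul0r mulr0.
  have -> : cond Q S I by rewrite /cond Qt eqxx QMI hS.
  case/andP: hS => SI /eqP St.
  have QIS : Q \subset ~: (I :\: S).
    apply/fintype.subsetP => x xQ; move: (fintype.subsetP QI x xQ); rewrite !inE.
    by move=> xI; apply/negP => /andP [_ xI']; rewrite xI' in xI.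
  under eq_bigr do rewrite mulr1 mulrA.
  rewrite (indep p (C := Cset Q (I :\: S)) (phi := fun E => @wgen R n k k' (nonadjM H E f :\: Q) I)).
  - by rewrite mul1r Cset_card // cardsDS // Qt St.
  - exact: Cset_pairs.
  - move=> E /=; congr wgen.
    by apply: nonadj_inv => // e; apply: Cset_meets.
rewrite sum_ind.
have -> : #|[pred S : {set 'I_n} | (S \subset I) && (#|S| == t)]| = 'C(#|I|, t).
  by rewrite -cards_draws; apply: eq_card => S; rewrite inE.
rewrite mulrA.
case: (boolP ((#|I| == (k - k')%N) || (#|I| == k))) => hI.
  apply: (Num.Theory.ler_wpM2r W0); apply: hg.
    by case/orP: hI => /eqP ->; rewrite ?leq_subr.
  by apply: leq_trans (max_card _) _; rewrite card_ord.
have -> : W = 0.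
  rewrite /W big1 // => E _.
  suff -> : @wgen R n k k' (nonadjM H E f :\: Q) I = 0 by rewrite mulr0.
  by apply/eqP; apply: contraNT hI => /wgen_card.
by rewrite !mulr0.
Qed.

Lemma bad_bound : p < 1 ->
  \sum_(E : {set {set 'I_n}}) wG p E *
    (\sum_(I : {set 'I_n}) wI R H k k' E f I * (~~ expansion_event H k k' t E f I)%:R)
  <= 'C(n, t)%:R * g.
Proof.
move=> plt1.
apply: (@le_trans _ _ (\sum_(E : {set {set 'I_n}}) wG p E *
   \sum_(I : {set 'I_n}) \sum_(Q : {set 'I_n}) \sum_(S : {set 'I_n})
     @wgen R n k k' (nonadjM H E f :\: Q) I * (cond Q S I)%:R
       * (dsj E (Cset Q (I :\: S)))%:R)).
  apply: ler_sum => E _; apply: (Num.Theory.ler_wpM2l (wG_ge0 p0 p1 E)).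
  by apply: ler_sum => I _; apply: step1.
rewrite swap4.
apply: (@le_trans _ _ (\sum_(Q : {set 'I_n}) \sum_(I : {set 'I_n}) (#|Q| == t)%:R * g *
   \sum_(E : {set {set 'I_n}}) wG p E * @wgen R n k k' (nonadjM H E f :\: Q) I)).
  by apply: ler_sum => Q _; apply: ler_sum => I _; apply: step2.
under eq_bigr do rewrite -mulr_sumr exchange_big /=.
rewrite (eq_bigr (fun Q : {set 'I_n} => (#|Q| == t)%:R * g)); last first.
  move=> Q _; rewrite (eq_bigr (fun E => wG p E)) ?wG_sum1 ?mulr1 // => E _.
  by rewrite -mulr_sumr wgen_sum // mulr1.
rewrite sum_ind.
have -> : #|[pred Q : {set 'I_n} | #|Q| == t]| = 'C(n, t).
  have := card_draws (ordinal n) t; rewrite card_ord => <-.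
  by apply: eq_card => Q; rewrite !inE.
by [].
Qed.

Lemma inner_bound : p < 1 ->
  1 - 'C(n, t)%:R * g <=
  \sum_(E : {set {set 'I_n}}) wG p E *
    (\sum_(I : {set 'I_n}) wI R H k k' E f I * (expansion_event H k k' t E f I)%:R).
Proof.
move=> plt1.
have e : \sum_(E : {set {set 'I_n}}) wG p E *
    (\sum_(I : {set 'I_n}) wI R H k k' E f I * (expansion_event H k k' t E f I)%:R)
  = 1 - \sum_(E : {set {set 'I_n}}) wG p E *
    (\sum_(I : {set 'I_n}) wI R H k k' E f I * (~~ expansion_event H k k' t E f I)%:R).
  rewrite -[X in _ = X - _](wG_sum1 n plt1) -sumrB; apply: eq_bigr => E _.
  have h1 : \sum_(I : {set 'I_n}) wI R H k k' E f I * (expansion_event H k k' t E f I)%:R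
    = 1 - \sum_(I : {set 'I_n}) wI R H k k' E f I * (~~ expansion_event H k k' t E f I)%:R.
    rewrite -[X in _ = X - _](@wgen_sum R n k k' (nonadjM H E f) hk) -sumrB; apply: eq_bigr => I _.
    by case: (expansion_event H k k' t E f I); rewrite /= ?mulr1 ?mulr0 ?subr0 ?subrr.
  by rewrite h1 mulrBr mulr1.
rewrite e lerD2l lerN2; exact: bad_bound.
Qed.
End Main.

Unset Implicit Arguments. Set Strict Implicit. Set Printing Implicit Defensive.

Theorem lemmaC5 (R : realType) (n m : nat) (delta : R) (H : {set {set 'I_m}})
    (k k' t : nat) :
  (0 < m)%N -> (m %| n)%N -> 0 < delta -> delta < 1 ->
  H \subset pairs m ->
  (k' <= m)%N -> (k' <= k)%N -> (k <= n - m)%N ->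
  6 * (n%:R `^ (1 - delta)) * ln (n%:R : R) <= (k - k')%:R ->
  (1 <= t)%N -> (t.*2 <= k - k')%N ->
  1 - 2 / n%:R <=
    @probGH R n m (n%:R `^ (delta - 1)) H k k' (@expansion_event n m H k k' t).
Proof.
move=> m0 mn d0 d1 HP k'm k'k kn hK t1 ht.
have ht' : (t * 2 <= k - k')%N by rewrite muln2.
have n1 : (2 < n)%N by lia.
have hk : (k <= n)%N by lia.
have t0 : (0 < t)%N by lia.
have tn : (t <= n)%N by lia.
have n1' : (1 < n)%N by lia.
have n0 : (0 < n)%N by lia.
have nR0 : (n%:R : R) != 0 by rewrite pnatr_eq0; lia.
have nRpos : (0 : R) < n%:R by rewrite ltr0n; lia.
set p := n%:R `^ (delta - 1).
have p0 : 0 <= p by apply: powR_ge0.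
have lnpos : 0 < ln (n%:R : R) by apply: ln_gt0; rewrite ltr1n; lia.
have plt1 : p < 1.
  rewrite /p /powR (negbTE nR0) expR_lt1.
  by rewrite pmulr_llt0 // subr_lt0.
have p1 : p <= 1 by apply: ltW.
have hp : 6 * ln (n%:R : R) <= p * (k - k')%:R.
  have e : p * n%:R `^ (1 - delta) = 1.
    rewrite /p -powRD; last by rewrite nR0 implybT.
    have -> : delta - 1 + (1 - delta) = 0 by ring.
    by rewrite powRr0.
  apply: le_trans (ler_wpM2l p0 hK).
  have -> : p * (6 * n%:R `^ (1 - delta) * ln n%:R) = 6 * ln n%:R * (p * n%:R `^ (1 - delta)) by ring.
  by rewrite e mulr1.
have Cpos : (0 : R) < 'C(n, t)%:R by rewrite ltr0n bin_gt0.
set g := ('C(n, t)%:R : R)^-1 * (n%:R)^-1.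
have hg : forall s, (k - k' <= s)%N -> (s <= n)%N ->
    'C(s, t)%:R * (1 - p) ^+ (t * (s - t)) <= g.
  move=> s Ks sn; rewrite /g -(ler_pM2l Cpos) [X in _ <= X]mulrA mulfV ?gt_eqF // mul1r.
  exact: (@numeric R n p (k - k')%N t s n1' p0 p1 hp t0 Ks (leq_trans ht Ks) sn).
have Cg : 'C(n, t)%:R * g = (n%:R)^-1 by rewrite /g mulrA mulfV ?gt_eqF // mul1r.
have inner f : 1 - (n%:R)^-1 <=
  \sum_(E : {set {set 'I_n}}) wG p E *
    (\sum_(I : {set 'I_n}) wI R H k k' E f I * (expansion_event H k k' t E f I)%:R).
  by rewrite -Cg; apply: inner_bound => //.
have wM0 f : 0 <= wM R f.
  by rewrite /wM; case: ifP => _; rewrite ?invr_ge0 ?ler0n.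
have dpos : (0 < n %/ m)%N by rewrite divn_gt0 // dvdn_leq.
have lt (i : 'I_m) : ((i : nat) * (n %/ m) < n)%N.
  have := ltn_ord i; rewrite -(ltn_pmul2r dpos) => h.
  by apply: (leq_trans h); rewrite mulnC divnK.
set f0 : {ffun 'I_m -> 'I_n} := [ffun i => Ordinal (lt i)].
have vf0 : valid_choice f0.
  by apply/forallP => i; rewrite ffunE /= mulnK.
have sumM : \sum_(f : {ffun 'I_m -> 'I_n}) wM R f = 1.
  rewrite /wM -big_mkcond /= sumr_const.
  have -> : #|[pred f : {ffun 'I_m -> 'I_n} | valid_choice f]| = #|[set g : {ffun 'I_m -> 'I_n} | valid_choice g]|.
    by apply: eq_card => f; rewrite !inE.
  rewrite -[X in X = 1]mulr_natr mulVf // pnatr_eq0 -lt0n; apply/card_gt0P; exists f0; rewrite inE.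
  exact: vf0.
have -> : @probGH R n m p H k k' (@expansion_event n m H k k' t) =
  \sum_(f : {ffun 'I_m -> 'I_n}) wM R f *
    (\sum_(E : {set {set 'I_n}}) wG p E *
    (\sum_(I : {set 'I_n}) wI R H k k' E f I * (expansion_event H k k' t E f I)%:R)).
  rewrite /probGH exchange_big; apply: eq_bigr => f _.
  rewrite mulr_sumr; apply: eq_bigr => E _.
  rewrite !mulr_sumr; apply: eq_bigr => I _.
  by rewrite [wG p E * wM R f]mulrC -!mulrA.
apply: (@le_trans _ _ (\sum_(f : {ffun 'I_m -> 'I_n}) wM R f * (1 - (n%:R)^-1))).
  rewrite -mulr_suml sumM mul1r.
  have hn : 0 < (n%:R : R)^-1 by rewrite invr_gt0.
  lra.
apply: ler_sum => f _; apply: Num.Theory.ler_wpM2l; [exact: wM0 | exact: inner].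
Qed.
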